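(* Let $\mathcal{S}=(\mathbb{Z}_n,\mathcal{S}_1,\dots,\mathcal{S}_4)$ be a cyclic triomino set with $\gcd(n,6)=1$, and let $m$, the filler $F$ and the brick $B$ be as defined below. Suppose $W\subset\{((3m+2)x,5y,6z): x,y,z\in\mathbb{Z}\}$ satisfies $W+(0,0,6n)=W$, $W\oplus B$ is non-overlapping, and $F$ tiles $\mathbb{Z}^3\setminus(W\oplus B)$. Then the $\mathcal{S}$-cyclic triomino problem is solvable.
   Context: Cyclic triomino set: $\mathcal{S}_i\subset\mathbb{Z}_n^3$ invariant under $(a,b,c)\mapsto(a+k,b+k,c+k)$ for all $k$; with $u_1=(1,0),u_2=(0,1),u_3=(-1,0),u_4=(0,-1)$ (indices mod 4), the $\mathcal{S}$-cyclic triomino problem is solvable if some $\mathcal{T}:\mathbb{Z}^2\to\mathbb{Z}_n$ has $(\mathcal{T}(s),\mathcal{T}(s+u_i),\mathcal{T}(s+u_{i+1}))\in\mathcal{S}_i$ for all $s$, $1\le i\le4$. $A\oplus B=\{a+b\}$, non-overlapping if each sum has a unique representation; $P$ tiles $E$ if $W'\oplus P=E$ non-overlapping for some $W'$; $cA=\{ca\}$; $I_{a,b}=\{x\in\mathbb{Z}: a\le x\le b\}$. Blockers (subsets of $\mathbb{Z}$): $\alpha_0=\emptyset,\alpha_1=\{0,5\}$, $\beta_0=\{1,4\},\beta_1=\emptyset$, $\gamma_0=\emptyset,\gamma_1=\{2,3\}$. With $\delta(0)=1$, $\delta(i)=0$ for $i\ne0$: $\alpha_T=\bigcup_{i=0}^{n-1}(n\alpha_{\delta(i)}+6i)$,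 and $\beta_T,\gamma_T$ likewise. $O=\{-1,0,1\}^2\setminus\{(0,0)\}$; filler $F=O\times\{0,n\}$. For each $i$ let $\overline{K_i}\subset\mathbb{Z}_n^3$ be a set of representatives with $\overline{K_i}\oplus\{(k,k,k):k\in\mathbb{Z}_n\}$ non-overlapping and equal to $\mathbb{Z}_n^3\setminus\mathcal{S}_i$; entries of $\mathbb{Z}_n$ are identified with integers in $\{0,\dots,n-1\}$. Let $m=\sum_{i=1}^4|\overline{K_i}|$ and list the elements of $\overline{K_1},\overline{K_2},\overline{K_3},\overline{K_4}$ in order as $(a_1,b_1,c_1),\dots,(a_m,b_m,c_m)$, with $(a_i,b_i,c_i)\in\overline{K_{g(i)}}$. Empty brick $B_0=I_{0,3m+1}\times I_{0,4}\times I_{0,6n-1}\setminus\bigcup_{i=0}^{m-1}(O\times I_{0,6n-1}+(3i+2,2,0))$. Define $T_{0,i,j}=O\times\alpha_T+(3i-1,2,-6j)$; $T_{1,i,j}=T_{5,i,j}=O\times\beta_T+(3i-3m-3,2,-6j)$; $T_{2,i,j}=O\times\gamma_T+(3i-1,-3,-6j)$; $T_{3,i,j}=O\times\beta_T+(3i+3m+1,2,-6j)$; $T_{4,i,j}=O\times\gamma_T+(3i-1,7,-6j)$. The brick is $B=B_0\cup\bigcup_{i=1}^m\big(T_{0,i,a_i}\cup T_{g(i),i,b_i}\cup T_{g(i)+1,i,c_i}\big)$. *)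

(* Defs.v *)
From Stdlib Require Import ZArith List Lia.
Open Scope Z_scope.

Definition pt := (Z * Z * Z)%type.
Definition zset := pt -> Prop.

Definition padd (p q : pt) : pt :=
  let '(x1, y1, z1) := p in let '(x2, y2, z2) := q in (x1 + x2, y1 + y2, z1 + z2).

Definition sumset (A B : zset) : zset :=
  fun w => exists a b, A a /\ B b /\ w = padd a b.
Definition nonoverlap (A B : zset) : Prop :=
  forall a a' b b', A a -> A a' -> B b -> B b' -> padd a b = padd a' b' -> a = a' /\ b = b'.
Definition tiles (P E : zset) : Prop :=
  exists W', nonoverlap W' P /\ forall w, E w <-> sumset W' P w.

Definition Icc (a b x : Z) : Prop := a <= x <= b.

Definition O2 (x y : Z) : Prop := -1 <= x <= 1 /\ -1 <= y <= 1 /\ ~ (x = 0 /\ y = 0).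

Definition prism (X : Z -> Prop) (p q r : Z) : zset :=
  fun w => let '(x, y, z) := w in O2 (x - p) (y - q) /\ X (z - r).

Definition alpha (k : nat) (z : Z) : Prop :=
  match k with O => False | _ => z = 0 \/ z = 5 end.
Definition beta (k : nat) (z : Z) : Prop :=
  match k with O => z = 1 \/ z = 4 | _ => False end.
Definition gamma (k : nat) (z : Z) : Prop :=
  match k with O => False | _ => z = 2 \/ z = 3 end.
Definition delta (i : nat) : nat := if Nat.eqb i 0 then 1%nat else 0%nat.

Definition blockT (X : nat -> Z -> Prop) (n : nat) (z : Z) : Prop :=
  exists i : nat, (i < n)%nat /\
    exists a, X (delta i) a /\ z = Z.of_nat n * a + 6 * Z.of_nat i.

Definition filler (n : nat) : zset :=
  fun w => let '(x, y, z) := w in O2 x y /\ (z = 0 \/ z = Z.of_nat n).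

Definition Tset (n m k i : nat) (j : Z) : zset :=
  let i' := Z.of_nat i in let m' := Z.of_nat m in
  match k with
  | 0%nat => prism (blockT alpha n) (3 * i' - 1) 2 (- 6 * j)
  | 1%nat | 5%nat => prism (blockT beta n) (3 * i' - 3 * m' - 3) 2 (- 6 * j)
  | 2%nat => prism (blockT gamma n) (3 * i' - 1) (-3) (- 6 * j)
  | 3%nat => prism (blockT beta n) (3 * i' + 3 * m' + 1) 2 (- 6 * j)
  | 4%nat => prism (blockT gamma n) (3 * i' - 1) 7 (- 6 * j)
  | _ => fun _ => False
  end.

(* Elements of Z_n are identified with integers in {0,...,n-1}. *)
Definition inZn (n : nat) (a : Z) : Prop := 0 <= a < Z.of_nat n.

Definition cyclic_triomino_set (n : nat) (S : nat -> Z -> Z -> Z -> Prop) : Prop :=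
  forall i, (1 <= i <= 4)%nat -> forall a b c k, inZn n a -> inZn n b -> inZn n c ->
    (S i a b c <-> S i ((a + k) mod Z.of_nat n) ((b + k) mod Z.of_nat n) ((c + k) mod Z.of_nat n)).

Definition rep (n : nat) (Ki : list pt) (j : nat) (s a b c : Z) : Prop :=
  (j < length Ki)%nat /\ inZn n s /\
  let '(x, y, z) := nth j Ki (0, 0, 0) in
  a = (x + s) mod Z.of_nat n /\ b = (y + s) mod Z.of_nat n /\ c = (z + s) mod Z.of_nat n.

(* Ki (listed without repetition) is a set of representatives:
   Ki (+) {(k,k,k)} is non-overlapping and equals Z_n^3 \ S_i *)
Definition rep_system (n : nat) (S : nat -> Z -> Z -> Z -> Prop) (i : nat) (Ki : list pt) : Prop :=
  Forall (fun t => let '(x, y, z) := t in inZn n x /\ inZn n y /\ inZn n z) Ki /\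
  (forall a b c, inZn n a -> inZn n b -> inZn n c ->
     ((exists j s, rep n Ki j s a b c) <-> ~ S i a b c)) /\
  (forall a b c j s j' s', rep n Ki j s a b c -> rep n Ki j' s' a b c -> j = j' /\ s = s').

Definition listing (K : nat -> list pt) : list (nat * pt) :=
  map (pair 1%nat) (K 1%nat) ++ map (pair 2%nat) (K 2%nat) ++
  map (pair 3%nat) (K 3%nat) ++ map (pair 4%nat) (K 4%nat).

Definition mK (K : nat -> list pt) : nat := length (listing K).

Definition B0 (n m : nat) : zset :=
  fun w => let '(x, y, z) := w in
    Icc 0 (3 * Z.of_nat m + 1) x /\ Icc 0 4 y /\ Icc 0 (6 * Z.of_nat n - 1) z /\
    ~ (exists i : nat, (i < m)%nat /\
         prism (Icc 0 (6 * Z.of_nat n - 1)) (3 * Z.of_nat i + 2) 2 0 w).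

(* the brick B; the i-th (1-based) listed element is (g(i), (a_i,b_i,c_i)) *)
Definition brick (n : nat) (K : nat -> list pt) : zset :=
  fun w =>
    B0 n (mK K) w \/
    exists i : nat, (1 <= i <= mK K)%nat /\
      let '(g, (a, b, c)) := nth (i - 1) (listing K) (0%nat, (0, 0, 0)) in
      Tset n (mK K) 0 i a w \/ Tset n (mK K) g i b w \/ Tset n (mK K) (g + 1) i c w.

(* u_1..u_4, indices mod 4 *)
Definition u (i : nat) : Z * Z :=
  match Nat.modulo i 4 with
  | 1%nat => (1, 0) | 2%nat => (0, 1) | 3%nat => (-1, 0) | _ => (0, -1)
  end.
Definition add2 (s t : Z * Z) : Z * Z := (fst s + fst t, snd s + snd t).

Definition solvable (n : nat) (S : nat -> Z -> Z -> Z -> Prop) : Prop :=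
  exists T : Z * Z -> Z, (forall s, inZn n (T s)) /\
    forall s i, (1 <= i <= 4)%nat ->
      S i (T s) (T (add2 s (u i))) (T (add2 s (u (i + 1)))).

(* Main.v *)
Require Import Defs.
From Stdlib Require Import ZArith List Lia.
Open Scope Z_scope.

Definition dxk (k : nat) : Z := match k with 1%nat | 5%nat => -1 | 3%nat => 1 | _ => 0 end.
Definition dyk (k : nat) : Z := match k with 2%nat => -1 | 4%nat => 1 | _ => 0 end.
Definition Tblk (n k : nat) : Z -> Prop :=
  match k with
  | 0%nat => blockT alpha n
  | 1%nat | 3%nat | 5%nat => blockT beta n
  | 2%nat | 4%nat => blockT gamma n
  | _ => fun _ => False end.

Lemma blockT_ext X n v v' : v = v' -> blockT X n v -> blockT X n v'.
Proof. intros ->; auto. Qed.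

Lemma Tset_iff n m k i j bx by0 bz : (k <= 5)%nat ->
  (Tset n m k i j (bx, by0, bz) <->
   O2 (bx - ((3 * Z.of_nat m + 2) * dxk k + 3 * (Z.of_nat i - 1) + 2)) (by0 - (5 * dyk k + 2)) /\
   Tblk n k (bz + 6 * j)).
Proof.
  intros Hk.
  destruct k as [|[|[|[|[|[|k]]]]]]; try lia; unfold Tset, Tblk, dxk, dyk; cbv beta iota zeta; unfold prism, O2;
  split; intros [H1 H2]; (split; [lia|]); (eapply blockT_ext; [|exact H2]); lia.
Qed.

Lemma Tset_le5 n m k i j b : Tset n m k i j b -> (k <= 5)%nat.
Proof. destruct k as [|[|[|[|[|[|k]]]]]]; unfold Tset; try lia; tauto. Qed.

Lemma blk_ok n k v r : (0 < n)%nat -> Z.gcd (Z.of_nat n) 6 = 1 -> Tblk n k v -> v <> Z.of_nat n * (6 * r + 1).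
Proof.
  intros Hn Hg Hb Hv.
  assert (H: exists t a0, (t < n)%nat /\ ((t = 0%nat /\ (a0 = 0 \/ a0 = 2 \/ a0 = 3 \/ a0 = 5)) \/ (t <> 0%nat /\ (a0 = 1 \/ a0 = 4))) /\ v = Z.of_nat n * a0 + 6 * Z.of_nat t).
  { destruct k as [|[|[|[|[|[|k]]]]]]; unfold Tblk in Hb; try tauto;
    destruct Hb as [t [Ht [a0 [Ha Hv']]]]; exists t, a0; refine (conj Ht (conj _ Hv'));
    unfold delta in Ha; destruct (Nat.eqb_spec t 0); simpl in Ha; try tauto; lia. }
  destruct H as [t [a0 [Ht [Hc Hv']]]].
  destruct Hc as [[-> Ha]|[Ht0 Ha]].
  - simpl in Hv'. assert (a0 = 6 * r + 1). { apply (Z.mul_reg_l _ _ (Z.of_nat n)); lia. } lia.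
  - assert (Hd: (Z.of_nat n | 6 * Z.of_nat t)).
    { exists (6 * r + 1 - a0). nia. }
    apply Z.gauss in Hd; [|exact Hg].
    destruct Hd as [q Hq].
    assert (Ht1: 0 < Z.of_nat t < Z.of_nat n) by lia.
    destruct (Z_le_gt_dec q 0).
    + assert (q * Z.of_nat n <= 0) by nia. lia.
    + assert (q * Z.of_nat n >= Z.of_nat n) by nia. lia.
Qed.

Lemma mul_small L d : 0 < L -> -L < L * d < L -> d = 0.
Proof.
  intros HL H. destruct (Z.lt_trichotomy d 0) as [h|[h|h]]; auto.
  - assert (L * d <= - L) by nia. lia.
  - assert (L * d >= L) by nia. lia.
Qed.

Lemma hc_sep M x1 y1 k1 x2 y2 k2 : 0 <= k1 < M -> 0 <= k2 < M ->
  -2 <= ((3*M+2)*x1 + 3*k1 + 2) - ((3*M+2)*x2 + 3*k2 + 2) <= 2 ->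
  -2 <= (5*y1+2) - (5*y2+2) <= 2 -> x1 = x2 /\ k1 = k2 /\ y1 = y2.
Proof.
  intros H1 H2 H3 H4.
  assert (x1 - x2 = 0).
  { apply (mul_small (3*M+2)); [lia|]. split; nia. }
  assert (x1 = x2) by lia. subst. lia.
Qed.

Lemma box_eq L x X b r : 0 < L -> 0 <= b <= L - 1 -> 0 <= r <= L - 1 -> L * x + b = L * X + r -> x = X /\ b = r.
Proof.
  intros HL Hb Hr E. assert (x - X = 0). { apply (mul_small L); [lia|]. split; nia. }
  lia.
Qed.

Lemma ring_meet dx dy : O2 dx dy -> exists o1 o2 p1 p2, O2 o1 o2 /\ O2 p1 p2 /\ o1 - p1 = dx /\ o2 - p2 = dy.
Proof.
  unfold O2; intros H.
  destruct (Z.eq_dec dx 0).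
  - exists 1, dy, 1, 0. lia.
  - destruct (Z.eq_dec dy 0).
    + exists dx, 1, 0, 1. lia.
    + exists dx, 0, 0, (-dy). lia.
Qed.

Lemma listing_in K g t : In (g, t) (listing K) -> (1 <= g <= 4)%nat.
Proof.
  unfold listing. rewrite !in_app_iff, !in_map_iff.
  intros [[x [E _]]|[[x [E _]]|[[x [E _]]|[x [E _]]]]]; injection E; intros; lia.
Qed.

Lemma nth_app_map (g : nat) (r : list (nat * pt)) (L : list pt) j :
  (j < length L)%nat ->
  nth j (map (pair g) L ++ r) (0%nat, (0,0,0)) = (g, nth j L (0,0,0)).
Proof.
  intros Hj. rewrite app_nth1 by (rewrite length_map; auto).
  rewrite nth_indep with (d' := (g, (0,0,0))) by (rewrite length_map; auto).
  rewrite map_nth. reflexivity.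
Qed.

Lemma listing_nth K g j : (1 <= g <= 4)%nat -> (j < length (K g))%nat ->
  exists i, (1 <= i <= mK K)%nat /\ nth (i - 1) (listing K) (0%nat, (0,0,0)) = (g, nth j (K g) (0,0,0)).
Proof.
  intros Hg Hj. unfold mK, listing.
  rewrite !length_app, !length_map.
  assert (g = 1 \/ g = 2 \/ g = 3 \/ g = 4)%nat as [ -> | [ -> | [ -> | -> ]]] by lia.
  - exists (S j). split; [lia|]. replace (S j - 1)%nat with j by lia.
    apply nth_app_map; auto.
  - exists (length (K 1%nat) + S j)%nat. split; [lia|].
    rewrite app_nth2 by (rewrite length_map; lia). rewrite length_map.
    replace (length (K 1%nat) + S j - 1 - length (K 1%nat))%nat with j by lia.
    apply nth_app_map; auto.
  - exists (length (K 1%nat) + length (K 2%nat) + S j)%nat. split; [lia|].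
    rewrite app_nth2 by (rewrite length_map; lia). rewrite length_map.
    rewrite app_nth2 by (rewrite length_map; lia). rewrite length_map.
    replace (length (K 1%nat) + length (K 2%nat) + S j - 1 - length (K 1%nat) - length (K 2%nat))%nat with j by lia.
    apply nth_app_map; auto.
  - exists (length (K 1%nat) + length (K 2%nat) + length (K 3%nat) + S j)%nat. split; [lia|].
    rewrite app_nth2 by (rewrite length_map; lia). rewrite length_map.
    rewrite app_nth2 by (rewrite length_map; lia). rewrite length_map.
    rewrite app_nth2 by (rewrite length_map; lia). rewrite length_map.
    replace (length (K 1%nat) + length (K 2%nat) + length (K 3%nat) + S j - 1 - length (K 1%nat) - length (K 2%nat) - length (K 3%nat))%nat with j by lia.
    rewrite <- (app_nil_r (map (pair 4%nat) (K 4%nat))).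
    apply nth_app_map; auto.
Qed.

Lemma listing_g K i : (1 <= i <= mK K)%nat -> forall g t, nth (i - 1) (listing K) (0%nat, (0,0,0)) = (g, t) -> (1 <= g <= 4)%nat.
Proof.
  intros Hi g t E. apply (listing_in K g t). rewrite <- E. apply nth_In. unfold mK in Hi. lia.
Qed.

Ltac pinj E := let E' := fresh "E" in let E'' := fresh "E" in apply pair_equal_spec in E; destruct E as [E E']; apply pair_equal_spec in E; destruct E as [E E''].

Ltac peq := cbn [padd]; apply pair_equal_spec; split; [apply pair_equal_spec; split|]; lia.

Definition LL (K : nat -> list pt) : Z := 3 * Z.of_nat (mK K) + 2.
Definition cov n K W : zset := sumset W (brick n K).
Definition fil n W' : zset := sumset W' (filler n).

Definition Hyp (n : nat) (K : nat -> list pt) (W W' : zset) : Prop :=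
  (0 < n)%nat /\ Z.gcd (Z.of_nat n) 6 = 1 /\
  (forall w, W w -> exists x y z, w = (LL K * x, 5 * y, 6 * z)) /\
  (forall w, W w <-> W (padd w (0, 0, 6 * Z.of_nat n))) /\
  nonoverlap W (brick n K) /\ nonoverlap W' (filler n) /\
  (forall w, ~ cov n K W w <-> fil n W' w).

Lemma per_iter n K W W' x y z : Hyp n K W W' -> W (x, y, z) -> forall r, W (x, y, z + 6 * Z.of_nat n * r).
Proof.
  intros (Hn & Hg & Hlat & Hper & _) Hw r.
  induction r using Z.peano_ind.
  - rewrite Z.mul_0_r, Z.add_0_r. exact Hw.
  - apply Hper in IHr. cbn [padd] in IHr. rewrite !Z.add_0_r in IHr.
    replace (z + 6 * Z.of_nat n * Z.succ r) with (z + 6 * Z.of_nat n * r + 6 * Z.of_nat n) by (rewrite <- Z.add_1_r; ring). exact IHr.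
  - apply Hper. cbn [padd]. rewrite !Z.add_0_r.
    replace (z + 6 * Z.of_nat n * Z.pred r + 6 * Z.of_nat n) with (z + 6 * Z.of_nat n * r) by (rewrite <- Z.sub_1_r; ring). exact IHr.
Qed.

Lemma corner_B0 n m z : (0 <= z <= 6 * Z.of_nat n - 1) -> B0 n m (0, 0, z).
Proof.
  intros Hz. unfold B0, Icc. split; [lia|]. split; [lia|]. split; [lia|].
  intros [i [Hi Hp]]. unfold prism, O2 in Hp. lia.
Qed.

Lemma Hcol n K W W' x y z z' : Hyp n K W W' -> W (LL K * x, 5 * y, 6 * z) -> W (LL K * x, 5 * y, 6 * z') ->
  (Z.of_nat n | z - z').
Proof.
  intros H Hw Hw'. pose proof H as (Hn & Hg & Hlat & Hper & Hno & _).
  set (N := Z.of_nat n) in *.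
  assert (HN : 0 < N) by (unfold N; lia).
  set (r := (z' - z) / N).
  pose proof (Z.div_mod (z' - z) N ltac:(lia)) as Ed.
  pose proof (Z.mod_pos_bound (z' - z) N HN) as Eb.
  assert (Hw2 : W (LL K * x, 5 * y, 6 * (z' - N * r))).
  { replace (6 * (z' - N * r)) with (6 * z' + 6 * N * (- r)) by ring.
    apply (per_iter n K W W'); auto. }
  assert (E := Hno (LL K * x, 5 * y, 6 * z) (LL K * x, 5 * y, 6 * (z' - N * r))
                  (0, 0, 6 * (z' - N * r) - 6 * z) (0, 0, 0) Hw Hw2).
  destruct E as [E1 _].
  - left. apply corner_B0. fold N. lia.
  - left. apply corner_B0. lia.
  - peq.
  - pinj E1. exists (- r). nia.
Qed.

Lemma B0_cov n K W W' X Y zeta bx by0 : Hyp n K W W' -> W (LL K * X, 5 * Y, 6 * zeta) ->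
  0 <= bx <= LL K - 1 -> 0 <= by0 <= 4 ->
  (forall i0, 0 <= i0 < Z.of_nat (mK K) -> ~ O2 (bx - (3 * i0 + 2)) (by0 - 2)) ->
  forall z, cov n K W (LL K * X + bx, 5 * Y + by0, z).
Proof.
  intros H Hw Hbx Hby Hh z. pose proof H as (Hn & Hg & Hlat & Hper & Hno & _).
  set (N := Z.of_nat n) in *.
  assert (HN : 0 < N) by (unfold N; lia).
  set (r := (z - 6 * zeta) / (6 * N)).
  pose proof (Z.div_mod (z - 6 * zeta) (6 * N) ltac:(lia)) as Ed.
  pose proof (Z.mod_pos_bound (z - 6 * zeta) (6 * N) ltac:(lia)) as Eb.
  exists (LL K * X, 5 * Y, 6 * zeta + 6 * N * r), (bx, by0, z - 6 * zeta - 6 * N * r).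
  split; [apply (per_iter n K W W'); auto|].
  split.
  - left. unfold B0, Icc. unfold LL in Hbx. split; [lia|]. split; [lia|]. split; [fold N; lia|].
    intros [i [Hi Hp]]. unfold prism in Hp. apply (Hh (Z.of_nat i)); [lia|]. tauto.
  - peq.
Qed.

Lemma fil_ring n K W W' x y z : Hyp n K W W' -> fil n W' (x, y, z) ->
  exists qx qy e, O2 (x - qx) (y - qy) /\ (e = 0 \/ e = Z.of_nat n) /\
   (forall o1 o2, O2 o1 o2 -> fil n W' (qx + o1, qy + o2, z) /\ fil n W' (qx + o1, qy + o2, z - e + (Z.of_nat n - e))) /\
   ~ fil n W' (qx, qy, z).
Proof.
  intros H Hf. pose proof H as (Hn & Hg & Hlat & Hper & Hno & Hnof & _).
  destruct Hf as [[[a1 b1] c1] [[[f1 f2] f3] [Hw1 [Hf1 E]]]].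
  cbn [padd] in E. pinj E.
  unfold filler in Hf1. destruct Hf1 as [Ho He].
  exists a1, b1, f3. split; [unfold O2 in *; lia|]. split; [lia|]. split.
  - intros o1 o2 Ho'. split.
    + exists (a1, b1, c1), (o1, o2, f3). split; [auto|]. split; [unfold filler; auto|]. peq.
    + exists (a1, b1, c1), (o1, o2, Z.of_nat n - f3). split; [auto|]. split; [unfold filler; split; [auto|lia]|].
      peq.
  - intros [[[a2 b2] c2] [[[g1 g2] g3] [Hw2 [Hg2 E']]]].
    cbn [padd] in E'. pinj E'.
    unfold filler in Hg2. destruct Hg2 as [Ho2 He2].
    destruct (ring_meet g1 g2 Ho2) as [o1 [o2 [p1 [p2 [Hoo [Hpp [Ed1 Ed2]]]]]]].
    destruct (Hnof (a1, b1, c1) (a2, b2, c2) (p1, p2, f3) (o1, o2, g3) Hw1 Hw2) as [Ew Eo].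
    + unfold filler; auto.
    + unfold filler; auto.
    + peq.
    + pinj Ew. pinj Eo. unfold O2 in Ho2. lia.
Qed.

Definition lzero : nat * pt := (0%nat, (0, 0, 0)).

Lemma cov_dec n K W W' px py pz : Hyp n K W W' -> cov n K W (px, py, pz) ->
  exists x y z, W (LL K * x, 5 * y, 6 * z) /\
   (B0 n (mK K) (px - LL K * x, py - 5 * y, pz - 6 * z) \/
    exists i g a b c k j, (1 <= i <= mK K)%nat /\ nth (i - 1) (listing K) lzero = (g, (a, b, c)) /\
      ((k = 0%nat /\ j = a) \/ (k = g /\ j = b) \/ (k = (g + 1)%nat /\ j = c)) /\
      O2 (px - LL K * x - (LL K * dxk k + 3 * (Z.of_nat i - 1) + 2)) (py - 5 * y - (5 * dyk k + 2)) /\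
      Tblk n k (pz - 6 * z + 6 * j)).
Proof.
  intros H [w [[[b1 b2] b3] [Hw [Hb E]]]]. pose proof H as (Hn & Hg & Hlat & _).
  destruct (Hlat w Hw) as [x [y [z ->]]].
  cbn [padd] in E. pinj E.
  exists x, y, z. split; [exact Hw|].
  destruct Hb as [Hb|[i [Hi Hb]]].
  - left. replace (px - LL K * x) with b1 by lia. replace (py - 5 * y) with b2 by lia.
    replace (pz - 6 * z) with b3 by lia. exact Hb.
  - right. destruct (nth (i - 1) (listing K) (0%nat, (0, 0, 0))) as [g [[a b] c]] eqn:En.
    assert (Hg4 := listing_g K i Hi g (a, b, c) En).
    exists i, g, a, b, c.
    destruct Hb as [Hb|[Hb|Hb]].
    + exists 0%nat, a. apply Tset_iff in Hb; [|lia]. destruct Hb as [Ho Hb].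
      split; [exact Hi|]. split; [exact En|]. split; [left; auto|].
      split; [unfold O2, LL in *; lia|]. eapply blockT_ext; [|exact Hb]; lia.
    + exists g, b. apply Tset_iff in Hb; [|lia]. destruct Hb as [Ho Hb].
      split; [exact Hi|]. split; [exact En|]. split; [right; left; auto|].
      split; [unfold O2, LL in *; lia|]. revert Hb. unfold Tblk.
      destruct g as [|[|[|[|[|[|g]]]]]]; try lia; apply blockT_ext; lia.
    + exists (g + 1)%nat, c. apply Tset_iff in Hb; [|lia]. destruct Hb as [Ho Hb].
      split; [exact Hi|]. split; [exact En|]. split; [right; right; auto|].
      split; [unfold O2, LL in *; lia|]. revert Hb. unfold Tblk.
      destruct g as [|[|[|[|[|[|g]]]]]]; try lia; apply blockT_ext; lia.
Qed.

Lemma Tblk_ext n k v v' : v = v' -> Tblk n k v -> Tblk n k v'.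
Proof. intros ->; auto. Qed.

Lemma cov_T n K W x y z i g a b c k j px py pz : W (LL K * x, 5 * y, 6 * z) -> (1 <= i <= mK K)%nat ->
  nth (i - 1) (listing K) lzero = (g, (a, b, c)) ->
  ((k = 0%nat /\ j = a) \/ (k = g /\ j = b) \/ (k = (g + 1)%nat /\ j = c)) ->
  O2 (px - LL K * x - (LL K * dxk k + 3 * (Z.of_nat i - 1) + 2)) (py - 5 * y - (5 * dyk k + 2)) ->
  Tblk n k (pz - 6 * z + 6 * j) -> cov n K W (px, py, pz).
Proof.
  intros Hw Hi En Hk Ho Hb.
  assert (Hg4 := listing_g K i Hi g (a, b, c) En).
  exists (LL K * x, 5 * y, 6 * z), (px - LL K * x, py - 5 * y, pz - 6 * z).
  split; [exact Hw|]. split; [|peq].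
  right. exists i. split; [exact Hi|]. unfold lzero in En. rewrite En. cbv iota.
  assert (HT : Tset n (mK K) k i j (px - LL K * x, py - 5 * y, pz - 6 * z)).
  { apply Tset_iff; [lia|]. split; [unfold O2, LL in *; lia|].
    eapply Tblk_ext; [|exact Hb]; lia. }
  destruct Hk as [[-> ->]|[[-> ->]|[-> ->]]]; auto.
Qed.

From Stdlib Require Import Classical.

Lemma O2_neg a b : O2 a b -> O2 (-a) (-b).
Proof. unfold O2; lia. Qed.

Lemma col_nonempty n K W W' : Hyp n K W W' -> (1 <= mK K)%nat ->
  forall X Y, exists z, W (LL K * X, 5 * Y, 6 * z).
Proof.
  intros H Hm X Y. pose proof H as (Hn & Hg & Hlat & Hper & Hno & Hnof & Htile).
  apply NNPP. intros Hne.
  assert (Hempty : forall z, ~ W (LL K * X, 5 * Y, 6 * z)) by (intros z Hz; apply Hne; eauto).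
  assert (HL : 5 <= LL K) by (unfold LL; lia).
  set (M := Z.of_nat (mK K)) in *.
  assert (Hc : ~ cov n K W (LL K * X + 2, 5 * Y + 2, 0)).
  { intros Hc. destruct (cov_dec n K W W' _ _ _ H Hc) as [x [y [z [Hw [Hb|Hb]]]]].
    - unfold B0, Icc in Hb. destruct Hb as [Hb1 [Hb2 _]].
      destruct (box_eq (LL K) x X (LL K * X + 2 - LL K * x) 2) as [-> _]; try (unfold LL in *; lia).
      destruct (box_eq 5 y Y (5 * Y + 2 - 5 * y) 2) as [-> _]; try lia.
      exact (Hempty z Hw).
    - destruct Hb as [i [g [a [b [c [k [j [Hi [En [Hk [Ho Hb]]]]]]]]]]].
      unfold LL in Ho. fold M in Ho.
      destruct (hc_sep M X Y 0 (x + dxk k) (y + dyk k) (Z.of_nat i - 1)) as [E1 [E2 E3]];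
        try (unfold O2 in Ho; lia); try nia.
      all: try (unfold O2 in Ho; nia). }
  apply Htile in Hc.
  destruct (fil_ring n K W W' _ _ _ H Hc) as [qx [qy [e [Hq [He [Hring Hnq]]]]]].
  assert (Hcq : cov n K W (qx, qy, 0)).
  { apply NNPP. intros Hn'. apply Hnq. apply Htile. exact Hn'. }
  destruct (cov_dec n K W W' _ _ _ H Hcq) as [x [y [z [Hw [Hb|Hb]]]]].
  - unfold B0, Icc in Hb. destruct Hb as [Hb1 [Hb2 _]]. unfold O2 in Hq.
    destruct (box_eq (LL K) x X (qx - LL K * x) (qx - LL K * X)) as [-> _]; try (unfold LL in *; lia).
    destruct (box_eq 5 y Y (qy - 5 * y) (qy - 5 * Y)) as [-> _]; try lia.
    exact (Hempty z Hw).
  - destruct Hb as [i [g [a [b [c [k [j [Hi [En [Hk [Ho Hb]]]]]]]]]]].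
    unfold LL in Ho. fold M in Ho.
    assert (HH : X = x + dxk k /\ 0 = Z.of_nat i - 1 /\ Y = y + dyk k).
    { apply hc_sep with M; try lia; rewrite ?Z.mul_add_distr_l; unfold LL in Hq; fold M in Hq; unfold O2 in Ho, Hq; lia. }
    destruct HH as [E1 [E2 E3]].
    assert (Hd : O2 (qx - (LL K * X + 2)) (qy - (5 * Y + 2))).
    { apply O2_neg in Hq. unfold O2 in *; lia. }
    destruct (ring_meet _ _ Hd) as [o1 [o2 [p1 [p2 [Ho' [Hp [Ed1 Ed2]]]]]]].
    destruct (Hring p1 p2 Hp) as [Hf _].
    apply Htile in Hf. apply Hf.
    eapply (cov_T n K W x y z i g a b c k j); eauto.
    unfold O2 in Ho' |- *. rewrite E1, Z.mul_add_distr_l in Ed1. rewrite E3 in Ed2. lia.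
Qed.

Lemma u_dk k : (1 <= k <= 5)%nat -> fst (u k) = - dxk k /\ snd (u k) = - dyk k.
Proof.
  intros Hk. destruct k as [|[|[|[|[|[|k]]]]]]; try lia; split; reflexivity.
Qed.

Lemma B0_cov' n K W W' X Y zeta bx by0 px py : Hyp n K W W' -> W (LL K * X, 5 * Y, 6 * zeta) ->
  0 <= bx <= LL K - 1 -> 0 <= by0 <= 4 ->
  (forall i0, 0 <= i0 < Z.of_nat (mK K) -> ~ O2 (bx - (3 * i0 + 2)) (by0 - 2)) ->
  px = LL K * X + bx -> py = 5 * Y + by0 ->
  forall z, cov n K W (px, py, z).
Proof. intros. subst. eapply B0_cov; eauto. Qed.

Lemma alpha0 n : (0 < n)%nat -> blockT alpha n 0.
Proof. intros Hn. exists 0%nat. split; [lia|]. exists 0. split; [left; reflexivity|]. lia. Qed.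

Lemma gamma2 n : (0 < n)%nat -> blockT gamma n (2 * Z.of_nat n).
Proof. intros Hn. exists 0%nat. split; [lia|]. exists 2. split; [left; reflexivity|]. lia. Qed.

Lemma gamma_cov n K W X Y i g a b c k j zk z0 : (1 <= i <= mK K)%nat -> (0 < n)%nat ->
  nth (i - 1) (listing K) lzero = (g, (a, b, c)) ->
  ((k = g /\ j = b) \/ (k = (g + 1)%nat /\ j = c)) -> (k = 2 \/ k = 4)%nat ->
  W (LL K * (X - dxk k), 5 * (Y - dyk k), 6 * zk) -> zk - j = z0 - a ->
  cov n K W (LL K * X + (3 * Z.of_nat i - 1), 5 * Y + 3, 6 * (z0 - a) + Z.of_nat n + Z.of_nat n).
Proof.
  intros Hi Hn En Hk Hk24 Hw Ez.
  eapply (cov_T n K W (X - dxk k) (Y - dyk k) zk i g a b c k j); eauto.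
  - rewrite !Z.mul_sub_distr_l. unfold O2. lia.
  - eapply Tblk_ext with (v := 2 * Z.of_nat n); [lia|].
    destruct Hk24 as [-> | ->]; apply gamma2; auto.
Qed.

Lemma hole n K W W' X Y i g a b c z0 z1 z2 : Hyp n K W W' -> (1 <= i <= mK K)%nat ->
  nth (i - 1) (listing K) lzero = (g, (a, b, c)) ->
  W (LL K * X, 5 * Y, 6 * z0) ->
  W (LL K * (X + fst (u g)), 5 * (Y + snd (u g)), 6 * z1) ->
  W (LL K * (X + fst (u (g + 1))), 5 * (Y + snd (u (g + 1))), 6 * z2) ->
  (Z.of_nat n | (z0 - a) - (z1 - b)) -> (Z.of_nat n | (z0 - a) - (z2 - c)) -> False.
Proof.
  intros H Hi En Hw0 Hw1 Hw2 Hd1 Hd2.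
  pose proof H as (Hn & Hg & Hlat & Hper & Hno & Hnof & Htile).
  assert (Hg4 := listing_g K i Hi g (a, b, c) En).
  assert (HL : 5 <= LL K) by (unfold LL; lia).
  assert (HLM : LL K = 3 * Z.of_nat (mK K) + 2) by reflexivity.
  set (M := Z.of_nat (mK K)) in *.
  set (N := Z.of_nat n) in *.
  set (px := LL K * X + (3 * Z.of_nat i - 1)).
  set (py := 5 * Y + 3).
  set (beta := 6 * (z0 - a)).
  destruct (u_dk g ltac:(lia)) as [Eu1 Eu2].
  destruct (u_dk (g + 1) ltac:(lia)) as [Eu1' Eu2'].
  rewrite Eu1, Eu2 in Hw1. rewrite Eu1', Eu2' in Hw2.
  assert (Hnc : ~ cov n K W (px, py, beta + N)).
  { intros Hc. destruct (cov_dec n K W W' _ _ _ H Hc) as [x [y [z [Hw [Hb|Hb]]]]].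
    - unfold B0, Icc in Hb. destruct Hb as [Hb1 [Hb2 [Hb3 Hb4]]].
      destruct (box_eq (LL K) x X (px - LL K * x) (3 * Z.of_nat i - 1)) as [-> _]; try (unfold px; lia).
      destruct (box_eq 5 y Y (py - 5 * y) 3) as [-> _]; try (unfold py; lia).
      apply Hb4. exists (i - 1)%nat. split; [lia|]. unfold prism, O2, Icc. unfold px, py. lia.
    - destruct Hb as [i' [g' [a' [b' [c' [k [j [Hi' [En' [Hk [Ho Hb]]]]]]]]]]].
      assert (HH : X = x + dxk k /\ Z.of_nat i - 1 = Z.of_nat i' - 1 /\ Y = y + dyk k).
      { apply hc_sep with M; try lia; rewrite ?Z.mul_add_distr_l; rewrite HLM in Ho; unfold px, py in Ho; unfold O2 in Ho; lia. }
      destruct HH as [E1 [E2 E3]].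
      assert (i' = i) by lia. subst i'.
      rewrite En in En'. injection En'. intros; subst g' a' b' c'.
      assert (Hk5 : (k <= 5)%nat) by lia.
      assert (Hx : forall zc, W (LL K * x, 5 * y, 6 * zc) -> (N | z - zc)) by
        (intros zc Hzc; apply (Hcol n K W W' x y z zc H Hw Hzc)).
      destruct Hk as [[-> ->]|[[-> ->]|[-> ->]]].
      + simpl in E1, E3. assert (x = X) by lia. assert (y = Y) by lia. subst x y.
        destruct (Hx z0 Hw0) as [q Hq].
        apply (blk_ok n 0 _ (- q) Hn Hg Hb). unfold beta, N in *. lia.
      + assert (x = X - dxk g) by lia. assert (y = Y - dyk g) by lia. subst x y.
        destruct (Hx z1 Hw1) as [q Hq]. destruct Hd1 as [q1 Hq1].
        apply (blk_ok n g _ (q1 - q) Hn Hg Hb). unfold beta, N in *. lia.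
      + assert (x = X - dxk (g + 1)) by lia. assert (y = Y - dyk (g + 1)) by lia. subst x y.
        destruct (Hx z2 Hw2) as [q Hq]. destruct Hd2 as [q1 Hq1].
        apply (blk_ok n (g + 1) _ (q1 - q) Hn Hg Hb). unfold beta, N in *. lia. }
  apply Htile in Hnc.
  destruct (fil_ring n K W W' _ _ _ H Hnc) as [qx [qy [e [Hq [He [Hring Hnq]]]]]].
  assert (Hcov : forall w, fil n W' w -> cov n K W w -> False) by (intros w Hf Hc; apply Htile in Hf; auto).
  destruct (Z.eq_dec qx px) as [Eqx|Nqx]; [destruct (Z.eq_dec qy (5 * Y + 2)) as [Eqy|Nqy]|].
  -
    destruct (Hring 0 1 ltac:(unfold O2; lia)) as [_ Hf].
    rewrite Eqx, Eqy, Z.add_0_r in Hf.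
    replace (5 * Y + 2 + 1) with py in Hf by (unfold py; lia).
    apply (Hcov _ Hf).
    destruct He as [-> | ->].
    + assert (Ez : beta + N - 0 + (Z.of_nat n - 0) = 6 * (z0 - a) + Z.of_nat n + Z.of_nat n) by (unfold beta, N; lia).
      rewrite Ez. unfold px, py.
      destruct Hd1 as [q1 Hq1]. destruct Hd2 as [q2 Hq2].
      assert (g = 1 \/ g = 2 \/ g = 3 \/ g = 4)%nat as [Eg|[Eg|[Eg|Eg]]] by lia.
      * eapply (gamma_cov n K W X Y i g a b c 2 c (z2 + N * q2) z0); eauto; try lia.
        rewrite Eg in Hw2. replace (6 * (z2 + N * q2)) with (6 * z2 + 6 * N * q2) by ring.
        apply (per_iter n K W W'); auto.
      * eapply (gamma_cov n K W X Y i g a b c 2 b (z1 + N * q1) z0); eauto; try lia.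
        rewrite Eg in Hw1. replace (6 * (z1 + N * q1)) with (6 * z1 + 6 * N * q1) by ring.
        apply (per_iter n K W W'); auto.
      * eapply (gamma_cov n K W X Y i g a b c 4 c (z2 + N * q2) z0); eauto; try lia.
        rewrite Eg in Hw2. replace (6 * (z2 + N * q2)) with (6 * z2 + 6 * N * q2) by ring.
        apply (per_iter n K W W'); auto.
      * eapply (gamma_cov n K W X Y i g a b c 4 b (z1 + N * q1) z0); eauto; try lia.
        rewrite Eg in Hw1. replace (6 * (z1 + N * q1)) with (6 * z1 + 6 * N * q1) by ring.
        apply (per_iter n K W W'); auto.
    + assert (Ez : beta + N - Z.of_nat n + (Z.of_nat n - Z.of_nat n) = 6 * (z0 - a)) by (unfold beta, N; lia).
      rewrite Ez.
      eapply (cov_T n K W X Y z0 i g a b c 0 a); eauto.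
      * unfold px, py, O2. simpl dxk. simpl dyk. lia.
      * eapply Tblk_ext; [|apply alpha0; auto]. lia.
  -
    unfold O2 in Hq. unfold py in Hq.
    assert (qy = 5 * Y + 3 \/ qy = 5 * Y + 4) as [Eqy|Eqy] by lia.
    + (* d = (0,1) impossible: then Hq says px-qx = 0 and py - qy = 0 *) lia.
    + destruct (Hring 1 0 ltac:(unfold O2; lia)) as [Hf _].
      apply (Hcov _ Hf).
      apply (B0_cov' n K W W' X Y z0 (3 * Z.of_nat i) 4); auto; try lia.
      all: try (intros i0 Hi0; unfold O2; lia); try (unfold px in Eqx; lia).
  -
    unfold O2 in Hq. unfold py in Hq.
    assert (Hcase : qy <= 5 * Y + 3 \/ qy = 5 * Y + 4) by lia.
    destruct Hcase as [Hy|Hy].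
    + destruct (Hring (px - qx) (5 * Y + 2 - qy) ltac:(unfold O2; lia)) as [Hf _].
      apply (Hcov _ Hf).
      apply (B0_cov' n K W W' X Y z0 (3 * Z.of_nat i - 1) 2); auto; try (unfold px; lia).
      all: try (intros i0 Hi0; unfold O2; lia).
    + destruct (Z_le_gt_dec qx px).
      * destruct (Hring 1 0 ltac:(unfold O2; lia)) as [Hf _].
        apply (Hcov _ Hf).
        apply (B0_cov' n K W W' X Y z0 (qx + 1 - LL K * X) 4); auto; try (unfold px in *; lia).
        all: try (intros i0 Hi0; unfold O2; lia).
      * destruct (Hring (-1) 0 ltac:(unfold O2; lia)) as [Hf _].
        apply (Hcov _ Hf).
        apply (B0_cov' n K W W' X Y z0 (qx + -1 - LL K * X) 4); auto; try (unfold px in *; lia).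
        all: try (intros i0 Hi0; unfold O2; lia).
Qed.
Lemma gcd_conv n : Nat.gcd n 6 = 1%nat -> Z.gcd (Z.of_nat n) 6 = 1%Z.
Proof.
  intros H. rewrite Nat.gcd_comm, <- Nat.gcd_mod in H by lia.
  rewrite Z.gcd_comm, <- Z.gcd_mod by lia.
  assert (E : (Z.of_nat n mod 6 = Z.of_nat (n mod 6)%nat)%Z) by (rewrite Nat2Z.inj_mod; reflexivity).
  rewrite E.
  assert (Hb : (n mod 6 < 6)%nat) by (apply Nat.mod_upper_bound; lia).
  destruct (n mod 6)%nat as [|[|[|[|[|[|k]]]]]]; simpl in H |- *; try discriminate; try reflexivity; lia.
Qed.

From Stdlib Require Import ClassicalEpsilon.

Lemma mod_div_eq N x y : 0 < N -> x mod N = y mod N -> (N | x - y).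
Proof.
  intros HN E. pose proof (Z.div_mod x N ltac:(lia)). pose proof (Z.div_mod y N ltac:(lia)).
  exists (x / N - y / N). nia.
Qed.

Theorem lemma4p3 (n : nat) (S : nat -> Z -> Z -> Z -> Prop) (K : nat -> list pt) (W : zset) :
  cyclic_triomino_set n S ->
  Nat.gcd n 6 = 1%nat ->
  (forall i, (1 <= i <= 4)%nat -> rep_system n S i (K i)) ->
  (forall w, W w -> exists x y z, w = ((3 * Z.of_nat (mK K) + 2) * x, 5 * y, 6 * z)) ->
  (forall w, W w <-> W (padd w (0, 0, 6 * Z.of_nat n))) ->
  nonoverlap W (brick n K) ->
  tiles (filler n) (fun w => ~ sumset W (brick n K) w) ->
  solvable n S.
Proof.
  intros Hcyc Hgcd Hrep Hlat Hper Hno [W' [Hnof Htile]].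
  assert (Hn : (0 < n)%nat) by (destruct n; [simpl in Hgcd; discriminate | lia]).
  assert (H : Hyp n K W W').
  { unfold Hyp. split; [exact Hn|]. split; [apply gcd_conv; exact Hgcd|].
    split; [exact Hlat|]. split; [exact Hper|]. split; [exact Hno|]. split; [exact Hnof|].
    intros w. exact (Htile w). }
  set (N := Z.of_nat n).
  assert (HN : 0 < N) by (unfold N; lia).
  set (zeta := fun s : Z * Z => epsilon (inhabits 0) (fun z => W (LL K * fst s, 5 * snd s, 6 * z))).
  exists (fun s => zeta s mod N). split.
  { intros s. unfold inZn. fold N. apply Z.mod_pos_bound. exact HN. }
  intros s gi Hgi. apply NNPP. intros HnS.
  destruct (Hrep gi Hgi) as [_ [Hiff _]].
  assert (Hin : forall s', inZn n (zeta s' mod N)) by (intros s'; unfold inZn; fold N; apply Z.mod_pos_bound; exact HN).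
  destruct (proj2 (Hiff _ _ _ (Hin s) (Hin _) (Hin _)) HnS) as [j [kk [Hj [Hkk Hr]]]].
  destruct (nth j (K gi) (0, 0, 0)) as [[a b] c] eqn:Ej.
  destruct Hr as [Ha [Hb Hc]]. fold N in Ha, Hb, Hc.
  destruct (listing_nth K gi j Hgi Hj) as [i [Hi En]].
  rewrite Ej in En.
  assert (Hz : forall s', W (LL K * fst s', 5 * snd s', 6 * zeta s')).
  { intros s'. unfold zeta. apply epsilon_spec. apply (col_nonempty n K W W' H); lia. }
  apply (hole n K W W' (fst s) (snd s) i gi a b c (zeta s) (zeta (add2 s (u gi))) (zeta (add2 s (u (gi + 1)))) H Hi En (Hz s)).
  - exact (Hz (add2 s (u gi))).
  - exact (Hz (add2 s (u (gi + 1)))).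
  - destruct (mod_div_eq N _ _ HN Ha) as [q1 Hq1]. destruct (mod_div_eq N _ _ HN Hb) as [q2 Hq2].
    exists (q1 - q2). fold N. lia.
  - destruct (mod_div_eq N _ _ HN Ha) as [q1 Hq1]. destruct (mod_div_eq N _ _ HN Hc) as [q2 Hq2].
    exists (q1 - q2). fold N. lia.
Qed.
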